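(* Let $k\ge 2$ and let $G=(V,E)$ be a $k$-quasi-planar topological graph whose edges are drawn as $x$-monotone curves, with vertices labeled $1,\dots,n$. Let $L$ be a vertical line containing no vertex, let $V_1$ (resp. $V_2$) be the set of vertices to the left (resp. right) of $L$, and let $F$ be a set of edges of $G$ each of which intersects $L$ (so each has its left endpoint in $V_1$ and right endpoint in $V_2$), such that: (i) for each $v\in V_1$, no two edges of $F$ with left endpoint $v$ cross at a point to the left of $L$; (ii) for each $w\in V_2$, no two edges of $F$ with right endpoint $w$ cross at a point to the right of $L$; (iii) the intersection points of the edges of $F$ with $L$ are pairwise distinct. Let $e_1,\dots,e_m$ be the edges of $F$ in the order in which they intersect $L$ from bottom to top, and let $S_1=p_1,\dots,p_m$ and $S_2=q_1,\dots,q_m$, where $p_i$ is the label of the left endpoint of $e_i$ and $q_i$ the label of its right endpoint. Then neither $S_1$ nor $S_2$ has a subsequence of type up-down-up$(k^3+2)$.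
   Context: A topological graph is a graph drawn in the plane so that vertices are distinct points and edges are non-self-intersecting arcs joining the corresponding points; no edge passes through a vertex other than its endpoints, any two edges meet in finitely many points, and tangencies are not allowed (shared interior points are proper crossings). It is $k$-quasi-planar if no $k$ of its edges are pairwise crossing. An edge is $x$-monotone if every vertical line meets it in at most one point. For $l\ge 2$, a sequence $s_1,\dots,s_{3l-2}$ is of type up-down-up$(l)$ if its first $l$ terms are pairwise different and $s_i=s_{2l-i}=s_{(2l-2)+i}$ for every $1\le i\le l$ (e.g. $a,b,c,d,c,b,a,b,c,d$ is of type up-down-up$(4)$). A sequence has a subsequence of this type if some (not necessarily contiguous) subsequence of it is of this type. *)

(* Defs.v *)
From Stdlib Require Import Reals.
From mathcomp Require Import all_boot.
Set Implicit Arguments. Unset Strict Implicit. Unset Printing Implicit Defensive.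

(* Every edge is x-monotone, hence it is the graph of a function over the
   x-interval [vx (eL e), vx (eR e)] between its left endpoint eL e and its
   right endpoint eR e. *)
Record drawing (n ne : nat) := Drawing {
  vx : 'I_n -> R;
  vy : 'I_n -> R;
  eL : 'I_ne -> 'I_n;
  eR : 'I_ne -> 'I_n;
  ef : 'I_ne -> R -> R
}.

Section Defs.
Variables (n ne : nat) (D : drawing n ne).

Definition lx (e : 'I_ne) : R := vx D (eL D e).
Definition rx (e : 'I_ne) : R := vx D (eR D e).

Definition cont_on (f : R -> R) (a b : R) : Prop :=
  forall x, (Rle (a) (x) /\ Rle (x) (b)) -> forall eps, Rlt R0 (eps) -> exists delta, Rlt R0 (delta) /\
    forall y, (Rle (a) (y) /\ Rle (y) (b)) -> Rlt (Rabs (Rminus y x)) (delta) -> Rlt (Rabs (Rminus (f y) (f x))) (eps).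

Definition cross_at (e e' : 'I_ne) (x : R) : Prop :=
  (Rlt (lx e) (x) /\ Rlt (x) (rx e)) /\ (Rlt (lx e') (x) /\ Rlt (x) (rx e')) /\ ef D e x = ef D e' x.

Definition cross (e e' : 'I_ne) : Prop := exists x, cross_at e e' x.

Definition xmono_topological : Prop :=
  (forall u v, vx D u = vx D v -> vy D u = vy D v -> u = v) /\
  (forall e, Rlt (lx e) (rx e) /\ ef D e (lx e) = vy D (eL D e) /\
             ef D e (rx e) = vy D (eR D e) /\ cont_on (ef D e) (lx e) (rx e)) /\
  (forall e e', eL D e = eL D e' -> eR D e = eR D e' -> e = e') /\
  (forall e v, (Rlt (lx e) (vx D v) /\ Rlt (vx D v) (rx e)) -> ef D e (vx D v) <> vy D v) /\
  (forall e e', e <> e' -> exists l : list R, forall x,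
     (Rle (lx e) (x) /\ Rle (x) (rx e)) -> (Rle (lx e') (x) /\ Rle (x) (rx e')) -> ef D e x = ef D e' x ->
     List.In x l) /\
  (* no tangencies: every shared interior point is a proper crossing *)
  (forall e e' x, e <> e' -> cross_at e e' x ->
     exists d, Rlt R0 (d) /\
       ((forall y, (Rlt (Rminus x d) (y) /\ Rlt (y) (x)) -> Rlt (ef D e y) (ef D e' y)) /\
        (forall y, (Rlt (x) (y) /\ Rlt (y) (Rplus x d)) -> Rlt (ef D e' y) (ef D e y)) \/
        (forall y, (Rlt (Rminus x d) (y) /\ Rlt (y) (x)) -> Rlt (ef D e' y) (ef D e y)) /\
        (forall y, (Rlt (x) (y) /\ Rlt (y) (Rplus x d)) -> Rlt (ef D e y) (ef D e' y)))).

Definition quasi_planar (k : nat) : Prop :=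
  forall S : {set 'I_ne}, #|S| = k ->
    exists e e', e \in S /\ e' \in S /\ e <> e' /\ ~ cross e e'.

End Defs.

(* sequences of type up-down-up(l): 0-based version of
   s_i = s_{2l-i} = s_{2l-2+i} for 1 <= i <= l, first l terms pairwise different *)
Definition up_down_up (l : nat) (t : seq nat) : Prop :=
  size t = 3 * l - 2 /\ uniq (take l t) /\
  forall i, 1 <= i <= l ->
    nth 0 t (i - 1) = nth 0 t (2 * l - i - 1) /\
    nth 0 t (i - 1) = nth 0 t (2 * l - 3 + i).

Definition has_udu_subseq (l : nat) (s : seq nat) : Prop :=
  exists t, subseq t s /\ up_down_up l t.

(* Main.v *)
Require Import Defs.
From Stdlib Require Import Reals.
From mathcomp Require Import all_boot.
From Stdlib Require Import Lra Lia Classical ClassicalEpsilon.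
From mathcomp Require Import zify.

Module AuxA.
Local Open Scope R_scope.

Definition clamp (a b x : R) := Rmax a (Rmin b x).

Lemma clamp_in a b x : a <= b -> a <= clamp a b x <= b.
Proof. intros; unfold clamp, Rmax, Rmin; repeat destruct Rle_dec; lra. Qed.

Lemma clamp_id a b x : a <= x <= b -> clamp a b x = x.
Proof. intros; unfold clamp, Rmax, Rmin; repeat destruct Rle_dec; lra. Qed.

Lemma clamp_lip a b x y : a <= b -> Rabs (clamp a b y - clamp a b x) <= Rabs (y - x).
Proof.
intros; unfold clamp, Rmax, Rmin; repeat destruct Rle_dec;
unfold Rabs; repeat destruct Rcase_abs; lra.
Qed.

Lemma ext_cont (f : R -> R) a b : a <= b -> cont_on f a b ->
  exists G, continuity G /\ forall x, a <= x <= b -> G x = f x.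
Proof.
intros Hab Hc. exists (fun x => f (clamp a b x)). split.
- intros x. unfold continuity_pt, continue_in, limit1_in, limit_in. simpl.
  intros eps Heps.
  destruct (Hc (clamp a b x) (clamp_in a b x Hab) eps Heps) as [d [Hd Hd']].
  exists d; split; [lra|]. intros y [_ Hy]. unfold R_dist in *.
  apply Hd'. apply clamp_in; lra.
  eapply Rle_lt_trans; [apply clamp_lip; lra| exact Hy].
- intros x Hx. now rewrite clamp_id.
Qed.

Lemma ivt_zero (G H : R -> R) x1 x2 : continuity G -> continuity H -> x1 < x2 ->
  ((G x1 < H x1 /\ H x2 < G x2) \/ (H x1 < G x1 /\ G x2 < H x2)) ->
  exists y, x1 < y < x2 /\ G y = H y.
Proof.
intros HG HH Hx [[h1 h2]|[h1 h2]].
- destruct (IVT (fun x => G x - H x) x1 x2) as [z [Hz Hz']].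
  + apply continuity_minus; auto.
  + exact Hx.
  + lra.
  + lra.
  + exists z. split; [|lra]. destruct Hz as [z1 z2].
    split; [destruct z1 as [z1|z1]; [lra| subst; lra]|destruct z2 as [z2|z2]; [lra|subst; lra]].
- destruct (IVT (fun x => H x - G x) x1 x2) as [z [Hz Hz']].
  + apply continuity_minus; auto.
  + exact Hx.
  + lra.
  + lra.
  + exists z. split; [|lra]. destruct Hz as [z1 z2].
    split; [destruct z1 as [z1|z1]; [lra| subst; lra]|destruct z2 as [z2|z2]; [lra|subst; lra]].
Qed.

End AuxA.
Import AuxA.

Module AuxB.
Set Implicit Arguments. Unset Strict Implicit. Unset Printing Implicit Defensive.

Fixpoint pathP {T} (R : T -> T -> Prop) (x : T) (s : seq T) : Prop :=
  match s with [::] => True | y :: s' => R x y /\ pathP R y s' end.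

Section Chains.
Variables (T : eqType) (R : T -> T -> Prop).
Hypothesis Rtr : forall x y z, R x y -> R y z -> R x z.
Hypothesis Rirr : forall x, ~ R x x.

Lemma pathP_mem x s : pathP R x s -> forall y, y \in s -> R x y.
Proof.
elim: s x => [|y s IH] x //= [Hxy Hp] z; rewrite inE => /orP [/eqP ->//|Hz].
exact: Rtr Hxy (IH _ Hp _ Hz).
Qed.

Lemma pathP_uniq x s : pathP R x s -> uniq (x :: s).
Proof.
elim: s x => [|y s IH] x //; move=> [Hxy Hp].
rewrite cons_uniq (IH _ Hp) andbT; apply/negP => Hx.
have Hp' : pathP R x (y :: s) by split.
have := pathP_mem Hp' Hx. exact: Rirr.
Qed.

Lemma pathP_pair x s : pathP R x s -> forall u v, u \in x :: s -> v \in x :: s ->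
  u <> v -> R u v \/ R v u.
Proof.
elim: s x => [|y s IH] x Hp u v.
  by rewrite !inE => /eqP -> /eqP ->.
have Hm := pathP_mem Hp.
rewrite [u \in _]in_cons [v \in _]in_cons => /orP [/eqP ->|Hu] /orP [/eqP ->|Hv] Huv //.
- by left; apply: Hm.
- by right; apply: Hm.
- exact: (IH _ (proj2 Hp)).
Qed.
End Chains.

Lemma max_ex (P : nat -> Prop) b : P 0 -> (forall n, P n -> n <= b) ->
  exists n, P n /\ forall m, P m -> m <= n.
Proof.
elim: b => [|b IH] H0 Hb.
  by exists 0; split => // m /Hb.
case: (classic (P b.+1)) => Hb1.
  by exists b.+1; split => // m /Hb.
apply: IH => // n Pn; have := Hb _ Pn; rewrite leq_eqVlt => /orP [/eqP E|//].
by subst.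
Qed.

Lemma pigeon (T U : finType) (f : T -> U) m : #|U| * m < #|T| ->
  exists u, m < #|[set x | f x == u]|.
Proof.
move=> H; apply: NNPP => Hn.
have Hle : forall u, #|[set x | f x == u]| <= m.
  move=> u; rewrite leqNgt; apply/negP => Hu; apply: Hn; by exists u.
move: H; rewrite ltnNge => /negP; apply.
rewrite -sum1_card (partition_big f xpredT) //=.
apply: leq_trans (_ : \sum_(u : U) m <= _); last by rewrite sum_nat_const cardE.
apply: leq_sum => u _; rewrite sum1dep_card; exact: Hle.
Qed.

Section Comb.
Variables (T : finType) (A B C : T -> T -> Prop).
Hypotheses (Atr : forall x y z, A x y -> A y z -> A x z) (Airr : forall x, ~ A x x).
Hypotheses (Btr : forall x y z, B x y -> B y z -> B x z) (Birr : forall x, ~ B x x).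
Hypothesis cover : forall u v, u <> v -> A u v \/ A v u \/ B u v \/ B v u \/ C u v.

Definition clq (R : T -> T -> Prop) (k : nat) :=
  exists S : seq T, size S = k /\ uniq S /\
    forall u v, u \in S -> v \in S -> u <> v -> R u v.

Lemma chain_or_height (R : T -> T -> Prop) k :
  (forall x y z, R x y -> R y z -> R x z) -> (forall x, ~ R x x) -> 0 < k ->
  clq (fun u v => R u v \/ R v u) k \/
  exists h : T -> nat, (forall v, h v < k.-1) /\ (forall u v, R u v -> h u < h v).
Proof.
move=> Rtr Rirr k0.
set R' := fun x y => R y x.
have R'tr : forall x y z, R' x y -> R' y z -> R' x z by move=> x y z /= H1 H2; exact: Rtr H2 H1.
case: (classic (exists v s, k.-1 <= size s /\ pathP R' v s)) => [[v [s [Hs Hp]]]|Hno].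
  left; exists (take k (v :: s)); split; first by rewrite size_takel //= -(prednK k0) ltnS.
  split; first by apply: take_uniq; exact: pathP_uniq Hp.
  move=> u w /mem_take Hu /mem_take Hw Huw.
  by case: (pathP_pair R'tr Hp Hu Hw Huw) => H; [right|left].
right.
have Hb : forall v s, pathP R' v s -> size s < k.-1.
  move=> v s Hp; rewrite ltnNge; apply/negP => Hs; apply: Hno; by exists v, s.
have Hm : forall v, exists n, (exists s, size s = n /\ pathP R' v s) /\
    forall m, (exists s, size s = m /\ pathP R' v s) -> m <= n.
  move=> v; apply: (@max_ex _ k.-1).
    by exists [::].
  move=> n [s [<- Hp]]; exact: ltnW (Hb _ _ Hp).
exists (fun v => proj1_sig (constructive_indefinite_description _ (Hm v))); split.
  move=> v; case: constructive_indefinite_description => n /= [[s [<- Hp]] _].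
  exact: Hb Hp.
move=> u v Huv.
case: constructive_indefinite_description => n /= [[s [<- Hp]] _].
case: constructive_indefinite_description => n' /= [_ Hmax].
apply: (Hmax (size s).+1); exists (u :: s); split => //.
Qed.

Lemma comb k : 0 < k -> k.-1 ^ 3 < #|T| ->
  clq (fun u v => A u v \/ A v u) k \/ clq (fun u v => B u v \/ B v u) k \/ clq C k.
Proof.
move=> k0 Hcard.
case: (chain_or_height Atr Airr k0) => [H|[hA [hAb hAm]]]; first by left.
case: (chain_or_height Btr Birr k0) => [H|[hB [hBb hBm]]]; first by right; left.
right; right.
pose f := fun v => (Ordinal (hAb v), Ordinal (hBb v)).
have [u0 Hu0] : exists u0, k.-1 < #|[set x | f x == u0]|.
  apply: pigeon; rewrite card_prod !card_ord -!mulnA.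
  by move: Hcard; rewrite (expnS _ 2) expnS expn1 mulnC -mulnA.
exists (take k (enum [set x | f x == u0])); split.
  by rewrite size_takel // -cardE; move: Hu0; rewrite prednK.
split; first by apply: take_uniq; exact: enum_uniq.
move=> u v /mem_take; rewrite mem_enum inE => /eqP Hu /mem_take;
  rewrite mem_enum inE => /eqP Hv Huv.
have Ef : f u = f v by rewrite Hu Hv.
have EA : hA u = hA v by move: Ef => [].
have EB : hB u = hB v by move: Ef => [].
case: (cover Huv) => [/hAm|[/hAm|[/hBm|[/hBm|//]]]]; rewrite ?EA ?EB ltnn //.
Qed.
End Comb.

End AuxB.
Import AuxB.

Module AuxC.
Set Implicit Arguments. Unset Strict Implicit. Unset Printing Implicit Defensive.
Local Open Scope R_scope.

Section Geo.
Variables (n ne : nat) (px py : 'I_n -> R) (ep : 'I_ne -> 'I_n) (g : 'I_ne -> R -> R)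
  (c : R) (F : {set 'I_ne}) (X : 'I_ne -> 'I_ne -> Prop).
Hypothesis Hvinj : forall u v, px u = px v -> py u = py v -> u = v.
Hypothesis HFc : forall e, e \in F -> (px (ep e) < c)%R.
Hypothesis Hstart : forall e, e \in F -> g e (px (ep e)) = py (ep e).
Hypothesis Hcont : forall e, e \in F -> exists G, continuity G /\
  forall x, (px (ep e) <= x <= c)%R -> G x = g e x.
Hypothesis Hnov : forall e v, e \in F -> (px (ep e) < px v < c)%R -> g e (px v) <> py v.
Hypothesis Hfan : forall e e' y, e \in F -> e' \in F -> e <> e' -> ep e = ep e' ->
  (px (ep e) < y < c)%R -> g e y <> g e' y.
Hypothesis HX : forall e e' y, e \in F -> e' \in F -> (px (ep e) < y)%R -> (px (ep e') < y)%R ->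
  (y < c)%R -> g e y = g e' y -> X e e'.

Lemma zero_lemma e e' x1 : e \in F -> e' \in F -> (px (ep e) <= x1)%R -> (px (ep e') <= x1)%R ->
  (x1 < c)%R ->
  ((g e x1 < g e' x1 /\ g e' c < g e c) \/ (g e' x1 < g e x1 /\ g e c < g e' c))%R ->
  exists y, (x1 < y < c)%R /\ g e y = g e' y.
Proof.
move=> He He' H1 H2 H3 Ho.
have [G [GC GE]] := Hcont He; have [G' [GC' GE']] := Hcont He'.
have HFc1 := HFc He; have HFc2 := HFc He'.
have [y [Hy Ey]] : exists y, (x1 < y < c)%R /\ G y = G' y.
  apply: ivt_zero => //.
  rewrite (GE x1) ?(GE c) ?(GE' x1) ?(GE' c); try lra.
exists y; split => //. rewrite -GE ?Ey ?GE'; lra.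
Qed.

Lemma cross_lemma e e' x1 : e \in F -> e' \in F -> (px (ep e) <= x1)%R -> (px (ep e') <= x1)%R ->
  (x1 < c)%R ->
  ((g e x1 < g e' x1 /\ g e' c < g e c) \/ (g e' x1 < g e x1 /\ g e c < g e' c))%R ->
  X e e' /\ X e' e.
Proof.
move=> He He' H1 H2 H3 Ho.
have [y [Hy Ey]] := zero_lemma He He' H1 H2 H3 Ho.
split; [apply: (HX (y:=y)) | apply: (HX (y:=y))]; try lra; auto.
Qed.

Lemma fan_le e e' x : e \in F -> e' \in F -> e <> e' -> ep e = ep e' ->
  (g e c < g e' c)%R -> (px (ep e) <= x <= c)%R -> (g e x <= g e' x)%R.
Proof.
move=> He He' Hne Hep Hc Hx.
apply: Rnot_lt_le => Hlt.
have Hxc : (x < c)%R.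
  case: Hx => _ [//|E]; subst; lra.
have Hxs : (px (ep e) < x)%R.
  case: Hx => [[//|E] _]. subst x. move: Hlt; rewrite Hstart // Hep Hstart //; lra.
have [y [Hy Ey]] := zero_lemma He He' (Rlt_le _ _ Hxs) (ltac:(rewrite -Hep; lra)) Hxc
  (or_intror (conj Hlt Hc)).
apply: (Hfan He He' Hne Hep _ Ey); lra.
Qed.

Lemma core k (s : seq 'I_ne) :
  (0 < k)%N ->
  (forall S : {set 'I_ne}, #|S| = k -> exists e e', e \in S /\ e' \in S /\ e <> e' /\ ~ X e e') ->
  uniq s -> (forall e, e \in s -> e \in F) ->
  (forall e0 i j, (i < j < size s)%N -> (g (nth e0 s i) c < g (nth e0 s j) c)%R) ->
  ~ has_udu_subseq (k ^ 3 + 2) [seq nat_of_ord (ep e) | e <- s].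
Proof.
move=> k0 Hqp Hu HsF Hord [t [Hsub [Hsz [Huq Heq]]]].
case/subseqP: Hsub => m _ Ht; rewrite -map_mask in Ht.
have Hs'u : uniq (mask m s) := mask_uniq Hu m.
have Hs'F : forall e, e \in mask m s -> e \in F := fun e H => HsF e (mem_mask H).
have Hs'o : forall e0 i j, (i < j < size (mask m s))%N ->
    (g (nth e0 (mask m s) i) c < g (nth e0 (mask m s) j) c)%R.
  move=> e0 i j Hij.
  pose r := fun e e' : 'I_ne => if Rlt_dec (g e c) (g e' c) then true else false.
  have Hp : pairwise r s.
    apply/(pairwiseP e0) => a b Ha Hb Hab; rewrite /r; case: Rlt_dec => // H; exfalso; apply: H.
    by apply: Hord; rewrite Hab; exact: Hb.
  have Hp' : pairwise r (mask m s) := subseq_pairwise (mask_subseq m s) Hp.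
  move/(pairwiseP e0): Hp' => H.
  case/andP: Hij => Hij Hj.
  have := H i j (ltn_trans Hij Hj) Hj Hij; rewrite /r; by case: Rlt_dec.
move: Hs'u Hs'F Hs'o Ht; move: (mask m s) => s' Hs'u Hs'F Hs'o Ht.
have [N HN] : exists N, N = (k ^ 3)%N by eexists.
rewrite -HN in Hsz Huq Heq.
have Hsize : size s' = (3 * (N + 2) - 2)%N by rewrite -Hsz Ht size_map.
have [e0 _] : exists e0 : 'I_ne, True.
  by move: Hsize; case: (s') => [|e0 ?] /=; [lia| exists e0].
pose P1 := fun i : nat => i.+1.
pose P2 := fun i : nat => (2 * (N + 2) - i - 3)%N.
pose P3 := fun i : nat => (2 * (N + 2) + i - 1)%N.
pose E1 := fun i : 'I_N => nth e0 s' (P1 i).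
pose E2 := fun i : 'I_N => nth e0 s' (P2 i).
pose E3 := fun i : 'I_N => nth e0 s' (P3 i).
have Hlab : forall p, (p < size s')%N -> nth 0%N t p = nat_of_ord (ep (nth e0 s' p)).
  by move=> p Hp; rewrite Ht (nth_map e0).
have HEF : forall p, (p < size s')%N -> nth e0 s' p \in F.
  by move=> p Hp; apply: Hs'F; apply: mem_nth.
have Hep : forall i : 'I_N, ep (E2 i) = ep (E1 i) /\ ep (E3 i) = ep (E1 i).
  move=> i; have [H1 H2] := Heq (i + 2)%N (ltac:(move: (ltn_ord i); lia)).
  have Hi := ltn_ord i.
  have Q1 : (i + 2 - 1 = P1 i)%N by rewrite /P1; lia.
  have Q2 : (2 * (N + 2) - (i + 2) - 1 = P2 i)%N by rewrite /P2; lia.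
  have Q3 : (2 * (N + 2) - 3 + (i + 2) = P3 i)%N by rewrite /P3; lia.
  rewrite Q1 Q2 Q3 in H1 H2.
  rewrite !Hlab in H1 H2; try (rewrite Hsize /P1 /P2 /P3; lia).
  by split; apply: val_inj; rewrite /E1 /E2 /E3 /= -?H1 -?H2.
have Hpos : forall i : 'I_N, (P1 i < P2 i)%N /\ (P2 i < P3 i)%N /\ (P3 i < size s')%N.
  move=> i; have Hi := ltn_ord i; rewrite Hsize /P1 /P2 /P3; lia.
have HF1 : forall i, E1 i \in F by move=> i; apply: HEF; have := Hpos i; lia.
have HF2 : forall i, E2 i \in F by move=> i; apply: HEF; have := Hpos i; lia.
have HF3 : forall i, E3 i \in F by move=> i; apply: HEF; have := Hpos i; lia.
have Ho12 : forall i, (g (E1 i) c < g (E2 i) c)%R.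
  by move=> i; apply: Hs'o; have := Hpos i; lia.
have Ho23 : forall i, (g (E2 i) c < g (E3 i) c)%R.
  by move=> i; apply: Hs'o; have := Hpos i; lia.
have Hoij : forall i j : 'I_N, (i < j)%N -> (g (E1 i) c < g (E1 j) c)%R /\
    (g (E2 j) c < g (E2 i) c)%R /\ (g (E3 i) c < g (E3 j) c)%R.
  move=> i j Hij; have := Hpos i; have := Hpos j; move=> Hj Hi.
  split; [|split]; apply: Hs'o; rewrite /P1 /P2 /P3 in Hi Hj *; lia.
pose V := fun i => ep (E1 i).
pose xv := fun i => px (V i).
have Hdist : forall i j : 'I_N, i <> j -> V i <> V j.
  move=> i j Hij E; apply: Hij.
  have := Hpos i; have := Hpos j; move=> Hj Hi.
  have Et : nth 0%N t (P1 i) = nth 0%N t (P1 j).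
    rewrite (Hlab (P1 i)) ?(Hlab (P1 j)); try lia. exact: (congr1 val E).
  have Hl : (N + 2 <= size t)%N by rewrite Hsz; lia.
  have Hst : size (take (N + 2) t) = (N + 2)%N by rewrite size_takel.
  have Li : (P1 i < N + 2)%N by rewrite /P1; have := ltn_ord i; lia.
  have Lj : (P1 j < N + 2)%N by rewrite /P1; have := ltn_ord j; lia.
  rewrite -(nth_take 0%N Li) -(nth_take 0%N Lj) in Et.
  move/eqP: Et; rewrite (nth_uniq _ _ _ Huq) ?Hst //.
  by move/eqP => /= [] /val_inj.
have Hxc : forall i, (xv i < c)%R by move=> i; exact: HFc (HF1 i).
have HepE : forall i, px (ep (E1 i)) = xv i /\ px (ep (E2 i)) = xv i /\ px (ep (E3 i)) = xv i.
  by move=> i; have [H2 H3] := Hep i; rewrite H2 H3.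
have Hst1 : forall i, g (E1 i) (xv i) = py (V i) by move=> i; exact: Hstart (HF1 i).
have Hst2 : forall i, g (E2 i) (xv i) = py (V i).
  by move=> i; have [H2 _] := Hep i; rewrite /xv /V -H2 Hstart.
have Hst3 : forall i, g (E3 i) (xv i) = py (V i).
  by move=> i; have [_ H3] := Hep i; rewrite /xv /V -H3 Hstart.
have sep : forall e e' x0, e \in F -> e' \in F -> (px (ep e) <= x0)%R -> (px (ep e') <= x0)%R ->
    (forall x, (x0 <= x < c)%R -> g e x <> g e' x) -> (g e c < g e' c)%R ->
    forall x, (x0 <= x <= c)%R -> (g e x < g e' x)%R.
  move=> e e' x0 He He' H1 H2 Hne Hc x [Hx0 [Hx|Hx]]; last by subst.
  case: (Rtotal_order (g e x) (g e' x)) => [//|[E|Hgt]].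
    by exfalso; apply: (Hne x); [lra|].
  have [y [Hy Ey]] := zero_lemma He' He (Rle_trans _ _ _ H2 Hx0) (Rle_trans _ _ _ H1 Hx0) Hx
    (or_introl (conj Hgt Hc)).
  by exfalso; apply: (Hne y); [lra|].
pose Rd := fun u v => (xv u <= xv v)%R /\ forall x, (xv v <= x <= c)%R -> (g (E2 v) x < g (E2 u) x)%R.
pose Ru := fun u v => (xv u <= xv v)%R /\ forall x, (xv v <= x <= c)%R -> (g (E2 u) x < g (E2 v) x)%R.
have Lcov : forall u v : 'I_N, u <> v -> (xv u <= xv v)%R ->
    (forall y, (xv v < y < c)%R -> g (E2 u) y <> g (E2 v) y) -> Rd u v \/ Ru u v.
  move=> u v Huv Hle Hne.
  have noeq : forall x, (xv v <= x < c)%R -> g (E2 u) x <> g (E2 v) x.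
    move=> x [[Hx|Hx] Hxc'] E; first by apply: (Hne x); [lra|].
    subst x; rewrite Hst2 in E.
    case: Hle => [Hlt|Heqx].
      apply: (Hnov (HF2 u) (v := V v) _ E); have [_ [-> _]] := HepE u; split => //; exact: Hxc.
    apply: (Hdist u v Huv); apply: Hvinj => //; by rewrite -Hst2 -[in RHS]E Heqx.
  have [_ [H2u _]] := HepE u; have [_ [H2v _]] := HepE v.
  case: (ltngtP u v) => [Huv'|Huv'|/val_inj //].
    left; split => //; apply: sep => //; try (rewrite ?H2u ?H2v; lra).
      by move=> x Hx E; apply: (noeq x Hx).
    by have := Hoij _ _ Huv'; lra.
  right; split => //; apply: sep => //; try (rewrite ?H2u ?H2v; lra).
  by have := Hoij _ _ Huv'; lra.
have Rd_ord : forall u v, Rd u v -> (u < v)%N.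
  move=> u v [Hle H]; have Hc := H c (conj (Rlt_le _ _ (Hxc v)) (Rle_refl c)).
  case: (ltngtP u v) => [//|Hvu|/val_inj E]; first by have := Hoij _ _ Hvu; lra.
  subst; lra.
have Ru_ord : forall u v, Ru u v -> (v < u)%N.
  move=> u v [Hle H]; have Hc := H c (conj (Rlt_le _ _ (Hxc v)) (Rle_refl c)).
  case: (ltngtP u v) => [Huv|//|/val_inj E]; first by have := Hoij _ _ Huv; lra.
  subst; lra.
have Fd : forall u v, Rd u v -> X (E3 u) (E3 v) /\ X (E3 v) (E3 u).
  move=> u v Hd; have Huv := Rd_ord _ _ Hd; case: Hd => [Hle H].
  have Hx := H (xv v) (conj (Rle_refl _) (Rlt_le _ _ (Hxc v))).
  have Hf : (g (E2 u) (xv v) <= g (E3 u) (xv v))%R.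
    apply: fan_le => //.
    - by move=> E; have := Ho23 u; rewrite E; lra.
    - by have [H2 H3] := Hep u; rewrite H2 H3.
    - have [_ [-> _]] := HepE u; split => //; exact: Rlt_le (Hxc v).
  have [_ [_ H3u]] := HepE u; have [_ [_ H3v]] := HepE v.
  apply: (cross_lemma (x1 := xv v)) => //; rewrite ?H3u ?H3v; try lra.
  right; split; last by have := Hoij _ _ Huv; lra.
  by rewrite Hst3 -Hst2; lra.
have Fu : forall u v, Ru u v -> X (E1 u) (E1 v) /\ X (E1 v) (E1 u).
  move=> u v Hd; have Hvu := Ru_ord _ _ Hd; case: Hd => [Hle H].
  have Hx := H (xv v) (conj (Rle_refl _) (Rlt_le _ _ (Hxc v))).
  have Hf : (g (E1 u) (xv v) <= g (E2 u) (xv v))%R.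
    apply: fan_le => //.
    - by move=> E; have := Ho12 u; rewrite E; lra.
    - by have [H2 H3] := Hep u; rewrite H2.
    - have [-> _] := HepE u; split => //; exact: Rlt_le (Hxc v).
  have [H1u _] := HepE u; have [H1v _] := HepE v.
  apply: (cross_lemma (x1 := xv v)) => //; rewrite ?H1u ?H1v; try lra.
  left; split; last by have := Hoij _ _ Hvu; lra.
  by rewrite Hst1 -Hst2; lra.
have Rdtr : forall x y z, Rd x y -> Rd y z -> Rd x z.
  move=> x y z [H1 H2] [H3 H4]; split; first lra.
  move=> w Hw; have := H4 w Hw; have := H2 w (ltac:(lra)); lra.
have Rutr : forall x y z, Ru x y -> Ru y z -> Ru x z.
  move=> x y z [H1 H2] [H3 H4]; split; first lra.
  move=> w Hw; have := H4 w Hw; have := H2 w (ltac:(lra)); lra.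
have Rdirr : forall x, ~ Rd x x by move=> x /Rd_ord; rewrite ltnn.
have Ruirr : forall x, ~ Ru x x by move=> x /Ru_ord; rewrite ltnn.
have cover : forall u v, u <> v -> Rd u v \/ Rd v u \/ Ru u v \/ Ru v u \/ X (E2 u) (E2 v).
  move=> u v Huv.
  case: (classic (X (E2 u) (E2 v))) => HX2; first by do 4 right.
  have [_ [H2u _]] := HepE u; have [_ [H2v _]] := HepE v.
  case: (Rle_lt_dec (xv u) (xv v)) => Hle.
    have Hne' : forall y, (xv v < y < c)%R -> g (E2 u) y <> g (E2 v) y.
      move=> y Hy E; apply: HX2; apply: (HX (y := y)) => //; rewrite ?H2u ?H2v; lra.
    by case: (Lcov u v Huv Hle Hne') => H; [left | right; right; left].
  have Hne' : forall y, (xv u < y < c)%R -> g (E2 v) y <> g (E2 u) y.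
    move=> y Hy E; apply: HX2; apply: (HX (y := y)) => //; rewrite ?H2u ?H2v; lra.
  by case: (Lcov v u (fun E => Huv (esym E)) (Rlt_le _ _ Hle) Hne') => H; [right; left | do 3 right; left].
have fin : forall E : 'I_N -> 'I_ne, injective E -> forall S : seq 'I_N, size S = k -> uniq S ->
    (forall u v, u \in S -> v \in S -> u <> v -> X (E u) (E v)) -> False.
  move=> E Einj S HS US HX'.
  have Hc : #|E @: [set x in S]| = k by rewrite card_imset // cardsE; move/card_uniqP: US => ->.
  have [e [e' [He [He' [Hne HnX]]]]] := Hqp _ Hc.
  case/imsetP: He => u; rewrite inE => Hu0 Ee; case/imsetP: He' => v; rewrite inE => Hv0 Ee'; subst e e'.
  apply: HnX; apply: HX' => // E'; apply: Hne; by rewrite E'.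
have inj_gen : forall E : 'I_N -> 'I_ne, (forall i j : 'I_N, (i < j)%N -> g (E i) c <> g (E j) c) -> injective E.
  move=> E HE i j Eij; case: (ltngtP i j) => [H|H|/val_inj //].
    by exfalso; apply: (HE _ _ H); rewrite Eij.
  by exfalso; apply: (HE _ _ H); rewrite Eij.
have Hk : ((k.-1) ^ 3 < #|'I_N|)%N by rewrite card_ord HN ltn_exp2r // prednK // ltnSn.
case: (comb Rdtr Rdirr Rutr Ruirr cover k0 Hk) => [[S [HS [US HP]]]|[[S [HS [US HP]]]|[S [HS [US HP]]]]].
- apply: (fin E3 _ S HS US).
    apply: inj_gen => i j Hij; have := Hoij _ _ Hij; lra.
  move=> u v Hu1 Hv1 Huv; case: (HP u v Hu1 Hv1 Huv) => /Fd; tauto.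
- apply: (fin E1 _ S HS US).
    apply: inj_gen => i j Hij; have := Hoij _ _ Hij; lra.
  move=> u v Hu1 Hv1 Huv; case: (HP u v Hu1 Hv1 Huv) => /Fu; tauto.
- apply: (fin E2 _ S HS US) => //.
  apply: inj_gen => i j Hij; have := Hoij _ _ Hij; lra.
Qed.
End Geo.

End AuxC.
Import AuxC.

Unset Implicit Arguments.

Theorem lemma10 (k n ne : nat) (D : drawing n ne) (c : R) (F : {set 'I_ne})
  (s : seq 'I_ne) :
  2 <= k ->
  xmono_topological D ->
  quasi_planar D k ->
  (* the vertical line L : x = c contains no vertex *)
  (forall v, vx D v <> c) ->
  (* every edge of F intersects L *)
  (forall e, e \in F -> (Rlt (lx D e) (c) /\ Rlt (c) (rx D e))) ->
  (* (i) edges of F with a common left endpoint do not cross left of L *)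
  (forall e e' x, e \in F -> e' \in F -> e <> e' -> eL D e = eL D e' ->
     Rlt (x) (c) -> ~ cross_at D e e' x) ->
  (* (ii) edges of F with a common right endpoint do not cross right of L *)
  (forall e e' x, e \in F -> e' \in F -> e <> e' -> eR D e = eR D e' ->
     Rlt (c) (x) -> ~ cross_at D e e' x) ->
  (* (iii) the intersection points with L are pairwise distinct *)
  (forall e e', e \in F -> e' \in F -> e <> e' -> ef D e c <> ef D e' c) ->
  (* s = e_1, ..., e_m lists F in the order of intersection with L, bottom to top *)
  uniq s -> (forall e, (e \in s) = (e \in F)) ->
  (forall (e0 : 'I_ne) i j, i < j < size s ->
     Rlt (ef D (nth e0 s i) c) (ef D (nth e0 s j) c)) ->
  ~ has_udu_subseq (k ^ 3 + 2) [seq nat_of_ord (eL D e) | e <- s] /\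
  ~ has_udu_subseq (k ^ 3 + 2) [seq nat_of_ord (eR D e) | e <- s].
Proof.
Local Open Scope R_scope.
move=> Hk [Hvinj [Hedge [_ [Hnov [_ _]]]]] Hqp _ HF Hi Hii _ Hu Hmem Hord.
have k0 : (0 < k)%N by apply: leq_trans Hk.
have HsF : forall e, e \in s -> e \in F by move=> e; rewrite Hmem.
have Hcont : forall e, exists G, continuity G /\ forall x, Rle (lx D e) x /\ Rle x (rx D e) -> G x = ef D e x.
  move=> e; have [Hlr [_ [_ Hc]]] := Hedge e; apply: ext_cont => //; lra.
split.
- apply: (core (px := vx D) (py := vy D) (ep := eL D) (g := ef D) (c := c) (F := F) (X := cross D)) => //.
  + move=> e He; exact: (proj1 (HF e He)).
  + move=> e He; exact: (proj1 (proj2 (Hedge e))).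
  + move=> e He; have [G [GC GE]] := Hcont e; exists G; split => // x Hx.
    apply: GE; have := HF e He; unfold lx, rx in *; lra.
  + move=> e v He Hv; apply: Hnov; have := HF e He; unfold lx, rx in *; lra.
  + move=> e e' y He He' Hne Hep Hy E; apply: (Hi e e' y He He' Hne Hep (proj2 Hy)).
    have Hl : lx D e' = lx D e by rewrite /lx Hep.
    have := HF e He; have := HF e' He'; move: Hl; unfold cross_at, lx, rx in *; lra.
  + move=> e e' y He He' H1 H2 H3 E; exists y.
    have := HF e He; have := HF e' He'; unfold cross_at, lx, rx in *; lra.
- have Hoc : continuity (fun x => - x).
    apply: (continuity_opp id); apply: derivable_continuous; exact: derivable_id.
  apply: (core (px := fun v => - vx D v) (py := vy D) (ep := eR D)
    (g := fun e x => ef D e (- x)) (c := (- c)) (F := F) (X := cross D)) => //.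
  + move=> u v E1 E2; apply: Hvinj => //; lra.
  + move=> e He; have := HF e He; unfold lx, rx in *; lra.
  + move=> e He; rewrite Ropp_involutive; exact: (proj1 (proj2 (proj2 (Hedge e)))).
  + move=> e He; have [G [GC GE]] := Hcont e; exists (fun x => G (- x)); split.
      exact: (continuity_comp (fun x => - x) G Hoc GC).
    move=> x Hx; apply: GE; have := HF e He; unfold lx, rx in *; lra.
  + move=> e v He Hv; rewrite Ropp_involutive; apply: Hnov; have := HF e He; unfold lx, rx in *; lra.
  + move=> e e' y He He' Hne Hep Hy E; apply: (Hii e e' (- y) He He' Hne Hep ltac:(lra)).
    have Hl : rx D e' = rx D e by rewrite /rx Hep.
    have := HF e He; have := HF e' He'; move: Hl; unfold cross_at, lx, rx in *; lra.
  + move=> e e' y He He' H1 H2 H3 E; exists (- y).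
    have := HF e He; have := HF e' He'; unfold cross_at, lx, rx in *; lra.
  + move=> e0 i j Hij; rewrite !Ropp_involutive; exact: Hord.
Qed.
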